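(* Let $(X,\mathcal{E})$ be an unbounded discrete ballean that is relatively maximal, and let $p,q$ be distinct ultrafilters from $X^\sharp$. Then $f^\beta(p)\neq q$ for every map $f:X\to X$ such that for every bounded set $B$ of $(X,\mathcal{E})$ both $f(B)$ and $f^{-1}(B)$ are bounded.
   Context: A ballean $(X,\mathcal{E})$ is a set with a coarse structure. $E[x]=\{y:(x,y)\in E\}$. $Y$ is bounded if $Y\subseteq E[x]$ for some $x$ and $E\in\mathcal{E}$. The ballean is discrete if for every $E\in\mathcal{E}$ there is a bounded $B$ with $E[x]=\{x\}$ for all $x\in X\setminus B$. $X^\sharp$ is the set of ultrafilters on $X$ all of whose members are unbounded. For $f:X\to X$, $f^\beta(p)$ denotes the ultrafilter generated by $\{f(P):P\in p\}$. A ballean is relatively maximal if $\mathcal{E}$ is the largest coarse structure on $X$ whose bounded sets are exactly the bounded sets of $(X,\mathcal{E})$. *)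

(* Defs.v *)
From Stdlib Require Import Classical FunctionalExtensionality PropExtensionality.

Set Implicit Arguments.

Definition rel (X : Type) := X -> X -> Prop.

Definition coarse_structure (X : Type) (CE : rel X -> Prop) : Prop :=
  CE (fun x y => x = y) /\
  (forall E, CE E -> forall x, E x x) /\
  (forall E F, CE E -> CE F -> CE (fun x z => exists y, E x y /\ F y z)) /\
  (forall E, CE E -> CE (fun x y => E y x)) /\
  (forall E E', CE E -> (forall x, E' x x) -> (forall x y, E' x y -> E x y) -> CE E') /\
  (forall x y, exists E, CE E /\ E x y).

Definition bounded (X : Type) (CE : rel X -> Prop) (Y : X -> Prop) : Prop :=
  exists (x : X) (E : rel X), CE E /\ (forall y, Y y -> E x y).

Definition unbounded_ballean (X : Type) (CE : rel X -> Prop) : Prop :=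
  ~ bounded CE (fun _ => True).

Definition discrete_ballean (X : Type) (CE : rel X -> Prop) : Prop :=
  forall E, CE E -> exists B, bounded CE B /\
    forall x, ~ B x -> forall y, E x y <-> y = x.

Definition relatively_maximal (X : Type) (CE : rel X -> Prop) : Prop :=
  forall CE', coarse_structure CE' ->
    (forall Y, bounded CE' Y <-> bounded CE Y) ->
    forall E, CE' E -> CE E.

Definition ultrafilter (X : Type) (p : (X -> Prop) -> Prop) : Prop :=
  p (fun _ => True) /\
  ~ p (fun _ => False) /\
  (forall A B, p A -> (forall x, A x -> B x) -> p B) /\
  (forall A B, p A -> p B -> p (fun x => A x /\ B x)) /\
  (forall A, p A \/ p (fun x => ~ A x)).

Definition sharp (X : Type) (CE : rel X -> Prop) (p : (X -> Prop) -> Prop) : Prop :=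
  ultrafilter p /\ forall P, p P -> ~ bounded CE P.

Definition image (X : Type) (f : X -> X) (P : X -> Prop) : X -> Prop :=
  fun y => exists x, P x /\ f x = y.

Definition preimage (X : Type) (f : X -> X) (B : X -> Prop) : X -> Prop :=
  fun x => B (f x).

Definition fbeta (X : Type) (f : X -> X) (p : (X -> Prop) -> Prop) : (X -> Prop) -> Prop :=
  fun A => exists P, p P /\ forall y, image f P y -> A y.

(* Main.v *)
Require Import Defs.
From Stdlib Require Import Classical FunctionalExtensionality PropExtensionality.
Set Implicit Arguments.

Section S.
Variable X : Type.
Variable CE : rel X -> Prop.
Hypothesis HCE : coarse_structure CE.

Definition img (E : rel X) (B : X -> Prop) : X -> Prop := fun y => exists x, B x /\ E x y.

Definition good (E : rel X) : Prop :=
  (forall x, E x x) /\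
  forall B, bounded CE B -> bounded CE (img E B) /\ bounded CE (img (fun x y => E y x) B).

Lemma bnd_sub (A B : X -> Prop) : bounded CE B -> (forall x, A x -> B x) -> bounded CE A.
Proof. intros [x [E [HE H]]] Hs. exists x, E. split; auto. Qed.

Lemma bnd_img (E : rel X) B : CE E -> bounded CE B -> bounded CE (img E B).
Proof.
  destruct HCE as [H0 [Hr [Hc [Hi [Hs Hconn]]]]].
  intros HE [x0 [E0 [HE0 HB]]].
  exists x0, (fun x z => exists y, E0 x y /\ E y z). split; [apply Hc; auto|].
  intros y [x [Bx Exy]]. exists x. split; auto.
Qed.

Lemma bnd_union A B : bounded CE A -> bounded CE B -> bounded CE (fun x => A x \/ B x).
Proof.
  destruct HCE as [H0 [Hr [Hc [Hi [Hs Hconn]]]]].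
  intros [x1 [E1 [HE1 HA]]] [x2 [E2 [HE2 HB]]].
  destruct (Hconn x1 x2) as [E3 [HE3 H3]].
  exists x1, (fun x z => exists y, E1 x y /\ (fun a c => exists b, E3 a b /\ E2 b c) y z).
  split. { apply Hc; auto. }
  intros y [Ay|By].
  - exists y. split; auto. exists y. split; apply Hr; auto.
  - exists x1. split; [apply Hr; auto|]. exists x2. split; auto.
Qed.

Lemma good_cs : coarse_structure good.
Proof.
  pose proof HCE as HC.
  destruct HCE as [H0 [Hr [Hc [Hi [Hs Hconn]]]]].
  assert (HCEg : forall E, CE E -> good E).
  { intros E HE. split; [apply Hr; auto|]. intros B HB. split; apply bnd_img; auto. }
  split; [apply HCEg; auto|].
  split; [intros E [HE _]; auto|].
  split.
  { intros E F [HEr HE] [HFr HF]. split.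
    - intros x. exists x; auto.
    - intros B HB. split.
      + apply bnd_sub with (img F (img E B)).
        * apply (proj1 (HF _ (proj1 (HE _ HB)))).
        * intros z [x [Bx [y [Exy Fyz]]]]. exists y. split; auto. exists x; auto.
      + apply bnd_sub with (img (fun x y => E y x) (img (fun x y => F y x) B)).
        * apply (proj2 (HE _ (proj2 (HF _ HB)))).
        * intros z [x [Bx [y [Ezy Fyx]]]]. exists y. split; auto. exists x; auto. }
  split.
  { intros E [HEr HE]. split; auto. intros B HB. destruct (HE B HB). split; auto. }
  split.
  { intros E E' [HEr HE] HE'r Hsub. split; auto. intros B HB. destruct (HE B HB) as [H1 H2].
    split.
    - apply bnd_sub with (img E B); auto. intros y [x [Bx Exy]]. exists x; auto.
    - apply bnd_sub with (img (fun x y => E y x) B); auto. intros y [x [Bx Exy]]. exists x; auto. }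
  intros x y. destruct (Hconn x y) as [E [HE Exy]]. exists E; auto.
Qed.

End S.

Theorem proposition3 (X : Type) (CE : rel X -> Prop)
  (HCE : coarse_structure CE)
  (Hunb : unbounded_ballean CE)
  (Hdisc : discrete_ballean CE)
  (Hmax : relatively_maximal CE)
  (p q : (X -> Prop) -> Prop)
  (Hp : sharp CE p) (Hq : sharp CE q) (Hpq : p <> q) :
  forall f : X -> X,
    (forall B, bounded CE B ->
       bounded CE (image f B) /\ bounded CE (preimage f B)) ->
    fbeta f p <> q.
Proof.
  intros f Hf Hfq.
  pose proof HCE as HC.
  destruct HCE as [H0 [Hr [Hc [Hi [Hs Hconn]]]]].
  set (G := fun x y : X => x = y \/ y = f x \/ x = f y).
  set (CE' := fun E : rel X => forall C, coarse_structure C -> (forall E0, CE E0 -> C E0) -> C G -> C E).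
  assert (HGg : good CE G).
  { split; [intros a; left; auto|]. intros B HB.
    destruct (Hf B HB) as [H1 H2].
    assert (HU : bounded CE (fun y => (B y \/ image f B y) \/ preimage f B y)).
    { apply bnd_union; auto. apply bnd_union; auto. }
    split; apply bnd_sub with (1 := HU).
    + intros y [a [Ba [Eq|[Eq|Eq]]]]; subst;
      first [left; left; assumption | right; assumption | left; right; eexists; split; [eassumption|reflexivity]].
    + intros y [a [Ba [Eq|[Eq|Eq]]]]; subst;
      first [left; left; assumption | right; assumption | left; right; eexists; split; [eassumption|reflexivity]]. }
  assert (HCEgood : forall E, CE E -> good CE E).
  { intros E0 HE0. split; [apply Hr; auto|]. intros B HB. split; apply bnd_img; auto. }
  assert (HCE'cs : coarse_structure CE').
  { unfold CE'. split; [intros C HCc HCi HG; apply HCi; auto|].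
    split; [intros E HE x; assert (Hg : good CE E) by (apply HE; auto; apply good_cs; auto); apply (proj1 Hg)|].
    split; [intros E F HE HF C HCc HCi HG; apply (proj1 (proj2 (proj2 HCc))); [apply HE|apply HF]; auto|].
    split; [intros E HE C HCc HCi HG; apply (proj1 (proj2 (proj2 (proj2 HCc)))); apply HE; auto|].
    split; [intros E E' HE HE'r Hsub C HCc HCi HG;
            apply (proj1 (proj2 (proj2 (proj2 (proj2 HCc))))) with E; auto; apply HE; auto|].
    intros x y. destruct (Hconn x y) as [E [HE Exy]]. exists E. split; auto.
    }
  assert (Hbd : forall Y, bounded CE' Y <-> bounded CE Y).
  { intros Y. split.
    - intros [x [E [HE HY]]].
      assert (Hg : good CE E) by (apply HE; auto; apply good_cs; auto).
      destruct Hg as [_ Hg].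
      assert (Hx : bounded CE (fun y => y = x)).
      { exists x, (fun a b => a = b). split; auto. }
      apply bnd_sub with (img E (fun y => y = x)); [apply (proj1 (Hg _ Hx))|].
      intros y Yy. exists x; auto.
    - intros [x [E [HE HY]]]. exists x, E. split; auto. intros C _ HCi _; auto. }
  assert (HGce : CE G).
  { apply (Hmax CE' HCE'cs Hbd). intros C _ _ HG; auto. }
  destruct (Hdisc G HGce) as [B [HB HBfix]].
  assert (Hfix : forall x, ~ B x -> f x = x).
  { intros x Hx. apply (HBfix x Hx (f x)). right; left; auto. }
  destruct Hp as [[pT [pF [pM [pI pU]]]] pS].
  destruct Hq as [[qT [qF [qM [qI qU]]]] qS].
  assert (pnB : p (fun x => ~ B x)).
  { destruct (pU B) as [H|H]; auto. exfalso. exact (pS B H HB). }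
  assert (Hpq' : forall P, p P -> q P).
  { intros P HP. rewrite <- Hfq. exists (fun x => P x /\ ~ B x). split; auto.
    intros y [x [[Px nBx] Hxy]]. rewrite Hfix in Hxy; auto. subst; auto. }
  apply Hpq. extensionality A. apply propositional_extensionality. split; auto.
  intros HqA. destruct (pU A) as [H|H]; auto. exfalso. apply qF.
  apply qM with (fun x => A x /\ ~ A x); [apply qI; auto|]. intros x [a b]; auto.
Qed.
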